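(* Let $d\ge1$ and $n\ge 3d+2$ be integers. If $G$ is an $n$-vertex graph with $d\le\delta(G)\le\Delta(G)\le n-2d-1$, then $G$ admits a matching of size $d+1$.
   Context: $G$ is a finite simple graph; $\delta(G)$ and $\Delta(G)$ denote its minimum and maximum degree. A matching is a set of pairwise vertex-disjoint edges; its size is the number of edges. *)

(* Defs.v *)
From mathcomp Require Import all_boot.
Set Implicit Arguments. Unset Strict Implicit. Unset Printing Implicit Defensive.

Definition simple_graph (T : finType) (e : rel T) : Prop :=
  irreflexive e /\ symmetric e.

Definition deg (T : finType) (e : rel T) (x : T) : nat := #|[set y | e x y]|.

(* Minimum and maximum degree (over a nonempty vertex set; 0 for empty T). *)
Definition min_deg (T : finType) (e : rel T) : nat :=
  \big[minn/#|T|]_(x : T) deg e x.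
Definition max_deg (T : finType) (e : rel T) : nat :=
  \max_(x : T) deg e x.

Definition is_edge (T : finType) (e : rel T) (E : {set T}) : bool :=
  [exists x, exists y, e x y && (E == [set x; y])].

Definition matching (T : finType) (e : rel T) (M : {set {set T}}) : bool :=
  [forall E in M, is_edge e E] &&
  [forall E1 in M, forall E2 in M, (E1 != E2) ==> [disjoint E1 & E2]].

(* Main.v *)
Require Import Defs.
From mathcomp Require Import zify.
From mathcomp Require Import all_boot.
Set Implicit Arguments. Unset Strict Implicit. Unset Printing Implicit Defensive.

Section M.
Variables (T : finType) (e : rel T).
Hypothesis sg : simple_graph e.

Lemma disjP (A B : {set T}) :
  reflect (forall x, x \in A -> x \notin B) [disjoint A & B].
Proof.
rewrite -setI_eq0; apply: (iffP eqP) => [H x xA|H].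
  apply/negP => xB; have : x \in A :&: B by rewrite inE xA.
  by rewrite H inE.
apply/setP => x; rewrite !inE; case xA: (x \in A) => //=.
by apply/negbTE/H.
Qed.

Lemma matchingP (M : {set {set T}}) : reflect ((forall E, E \in M -> is_edge e E) /\ trivIset M)
  (matching e M).
Proof.
apply: (iffP andP) => [[/forall_inP H1 H2]|[H1 /trivIsetP H2]]; split => //.
  apply/trivIsetP => A B AM BM AB.
  by move/forall_inP: H2 => /(_ _ AM) /forall_inP /(_ _ BM) /implyP; apply.
  by apply/forall_inP.
apply/forall_inP => A AM; apply/forall_inP => B BM; apply/implyP; exact: H2.
Qed.

Lemma edgeP E : is_edge e E -> exists x y, [/\ e x y & E = [set x; y]].
Proof. by case/existsP => x /existsP [y /andP [exy /eqP ->]]; exists x, y. Qed.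

Lemma match_sub (M' M : {set {set T}}) : M' \subset M -> matching e M -> matching e M'.
Proof.
move=> sub /matchingP [H1 /trivIsetP H2]; apply/matchingP; split.
  by move=> E /(subsetP sub); apply: H1.
apply/trivIsetP => A B /(subsetP sub) AM /(subsetP sub) BM; exact: H2.
Qed.

Lemma coverP (M : {set {set T}}) x : reflect (exists2 E, E \in M & x \in E) (x \in cover M).
Proof. exact: bigcupP. Qed.

Lemma add_edge (M : {set {set T}}) a b : matching e M -> e a b -> a \notin cover M ->
  b \notin cover M ->
  matching e ([set a; b] |: M) && (#|[set a; b] |: M| == #|M|.+1).
Proof.
move=> /matchingP [H1 /trivIsetP H2] eab aM bM.
have nin : [set a; b] \notin M.
  by apply/negP => abM; case/negP: aM; apply/coverP; exists [set a; b]; rewrite // !inE eqxx.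
have dis F : F \in M -> [disjoint [set a; b] & F].
  move=> FM; apply/disjP => x /set2P [->|->]; apply/negP => xF.
    by case/negP: aM; apply/coverP; exists F.
  by case/negP: bM; apply/coverP; exists F.
rewrite cardsU1 nin add1n eqxx andbT; apply/matchingP; split.
  move=> E; rewrite !inE => /orP [/eqP ->|]; last exact: H1.
  by apply/existsP; exists a; apply/existsP; exists b; rewrite eab eqxx.
apply/trivIsetP => A B; rewrite !inE => /orP [/eqP ->|AM] /orP [/eqP ->|BM];
  rewrite ?eqxx // => AB.
- exact: dis.
- by rewrite disjoint_sym; apply: dis.
- exact: H2.
Qed.

Lemma cover_add (M : {set {set T}}) a b z : z \in cover ([set a; b] |: M) ->
  [\/ z = a, z = b | z \in cover M].
Proof.
case/coverP => F; rewrite !inE => /orP [/eqP ->|FM].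
  by case/set2P => ->; [constructor 1|constructor 2].
by move=> zF; constructor 3; apply/coverP; exists F.
Qed.

Lemma in_cover (M : {set {set T}}) E z : E \in M -> z \in E -> z \in cover M.
Proof. by move=> EM zE; apply/coverP; exists E. Qed.

Lemma rem_edge (M : {set {set T}}) E : matching e M -> E \in M ->
  [/\ matching e (M :\ E), #|M :\ E|.+1 = #|M| &
   forall z, z \in cover (M :\ E) -> z \in cover M /\ z \notin E].
Proof.
move=> mM EM; split.
- by apply: match_sub mM; apply: subD1set.
- by rewrite (cardsD1 E M) EM.
move=> z /coverP [F]; rewrite !inE => /andP [FE FM] zF; split.
  exact: in_cover zF.
move/matchingP: mM => [_ /trivIsetP H]; have := H F E FM EM FE.
by move/disjP => /(_ z zF).
Qed.

Lemma augment (M : {set {set T}}) E x y u u' : matching e M -> E \in M ->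
  x \in E -> y \in E -> x != y -> e x u -> e y u' -> u != u' ->
  u \notin cover M -> u' \notin cover M ->
  exists M', matching e M' && (#|M'| == #|M|.+1).
Proof.
move=> mM EM xE yE xy exu eyu' uu' uM u'M.
have [m1 c1 cov1] := rem_edge mM EM.
have xM1 : x \notin cover (M :\ E).
  by apply/negP => /cov1 [_]; rewrite xE.
have uM1 : u \notin cover (M :\ E).
  by apply/negP => /cov1 [] ; rewrite (negbTE uM).
have /andP [m2 /eqP c2] := add_edge m1 exu xM1 uM1.
have xcM : x \in cover M by apply: in_cover xE.
have ycM : y \in cover M by apply: in_cover yE.
have yM2 : y \notin cover ([set x; u] |: M :\ E).
  apply/negP => /cover_add [yx|yu|/cov1 [_]]; last by rewrite yE.
    by rewrite yx eqxx in xy.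
  by rewrite -yu ycM in uM.
have u'M2 : u' \notin cover ([set x; u] |: M :\ E).
  apply/negP => /cover_add [yx|yu|/cov1 []]; last by rewrite (negbTE u'M).
    by rewrite yx xcM in u'M.
  by rewrite yu eqxx in uu'.
have /andP [m3 /eqP c3] := add_edge m2 eyu' yM2 u'M2.
by exists ([set y; u'] |: ([set x; u] |: M :\ E)); rewrite m3 c3 c2 c1 eqxx.
Qed.

Lemma indep (M : {set {set T}}) u v : matching e M -> e u v ->
  u \notin cover M -> v \notin cover M ->
  exists M', matching e M' && (#|M'| == #|M|.+1).
Proof. by move=> mM euv uM vM; eexists; apply: add_edge mM euv uM vM. Qed.

End M.

Section N.
Variables (T : finType) (e : rel T).
Hypothesis sg : simple_graph e.

Lemma deg_le x : deg e x <= max_deg e.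
Proof. by rewrite /max_deg (bigD1 x) //= leq_maxl. Qed.
Lemma deg_ge x : min_deg e <= deg e x.
Proof.
have: x \in index_enum T by rewrite mem_index_enum.
rewrite /min_deg; elim: (index_enum T) => [//|y s IH].
rewrite inE big_cons /= => /orP [/eqP <-|/IH h]; first exact: geq_minl.
exact: leq_trans (geq_minr _ _) h.
Qed.

Variable M : {set {set T}}.
Hypothesis mM : matching e M.
Hypothesis noext : forall M', matching e M' -> #|M'| != #|M|.+1.

Let VM := cover M.
Let U := ~: VM.

Lemma Uind u v : u \in U -> v \in U -> ~~ e u v.
Proof.
rewrite !inE => uM vM; apply/negP => euv.
by have [M' /andP [m' c']] := indep mM euv uM vM; move: (noext m'); rewrite c'.
Qed.

Definition f v := #|[set u in U | e v u]|.

Lemma f_le v : f v <= max_deg e.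
Proof.
apply: leq_trans (deg_le v); apply: subset_leq_card; apply/subsetP => u.
by rewrite !inE => /andP [].
Qed.

Lemma f_one E x y : E \in M -> x \in E -> y \in E -> x != y -> 0 < f y -> f x <= 1.
Proof.
move=> EM xE yE xy /card_gt0P [u']; rewrite inE => /andP [u'U eyu'].
rewrite leqNgt; apply/negP => fx2.
have : 0 < #|[set u in U | e x u] :\ u'|.
  by move: fx2; rewrite /f (cardsD1 u' [set u in U | e x u]); case: (u' \in _) => /=; lia.
case/card_gt0P => u; rewrite !inE => /and3P [uu' uU exu].
move: uU u'U; rewrite !inE => uU u'U.
have [M' /andP [m' c']] := augment mM EM xE yE xy exu eyu' uu' uU u'U.
by move: (noext m'); rewrite c'.
Qed.

Lemma edge_sum E : E \in M -> \sum_(v in E) f v <= maxn (max_deg e) 2.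
Proof.
move=> EM; move/matchingP: mM => [H _].
have [x [y [exy Exy]]] := edgeP (H E EM).
have xy : x != y by apply/eqP => xy; move: exy; rewrite xy (fst sg).
have xE : x \in E by rewrite Exy !inE eqxx.
have yE : y \in E by rewrite Exy !inE eqxx orbT.
rewrite Exy big_setU1 ?inE //= big_set1.
have h1 := f_le x; have h2 := f_le y.
case: (posnP (f x)) => fx; first lia.
case: (posnP (f y)) => fy; first lia.
have := f_one EM xE yE xy fy.
have := f_one EM yE xE (ltac:(by rewrite eq_sym)) fx. lia. Qed.

Lemma trivM : trivIset M.
Proof. by case/matchingP: mM. Qed.

Lemma cardVM : #|VM| = 2 * #|M|.
Proof.
have -> : #|VM| = \sum_(v in VM) 1 by rewrite sum1_card.
rewrite (big_trivIset _ trivM) /= mulnC -sum_nat_const.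
apply: eq_bigr => E EM; rewrite sum1_card.
move/matchingP: mM => [H _].
have [x [y [exy ->]]] := edgeP (H E EM).
have xy : x != y by apply/eqP => xy; move: exy; rewrite xy (fst sg).
by rewrite cards2 xy.
Qed.

Lemma upper : \sum_(v in VM) f v <= #|M| * maxn (max_deg e) 2.
Proof.
rewrite (big_trivIset _ trivM) /= -sum_nat_const; apply: leq_sum => E EM.
exact: edge_sum.
Qed.

Lemma dbl : \sum_(u in U) deg e u = \sum_(v in VM) f v.
Proof.
transitivity (\sum_(u in U) \sum_(v in VM) (e u v : nat)).
  apply: eq_bigr => u uU; rewrite /deg.
  have -> : [set y | e u y] = [set y | (y \in VM) && e u y].
    apply/setP => y; rewrite !inE; case euy: (e u y); rewrite ?andbF //= andbT.
    symmetry; apply/negPn/negP => yM.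
    have : ~~ e u y by apply: Uind; rewrite // inE.
    by rewrite euy.
  rewrite -sum1dep_card big_mkcondr /=; apply: eq_bigr => v _; by case: (e u v).
rewrite exchange_big; apply: eq_bigr => v _.
rewrite /f -sum1dep_card big_mkcondr; apply: eq_bigr => u _.
by rewrite ((snd sg) u v); case: (e v u).
Qed.

Lemma contra (d : nat) : 1 <= d -> 3 * d + 2 <= #|T| -> d <= min_deg e ->
  max_deg e <= #|T| - 2 * d - 1 -> #|M| <= d -> False.
Proof.
move=> d1 dn dmin dmax Md.
have low : #|U| * d <= \sum_(u in U) deg e u.
  rewrite -sum_nat_const; apply: leq_sum => u _; exact: leq_trans dmin (deg_ge u).
have cU : #|VM| + #|U| = #|T| by rewrite cardsC.
have := upper; rewrite -dbl => up.
have := leq_trans low up; rewrite cardVM in cU.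
move: cU dmax Md dn d1.
set m := #|M|; set D := max_deg e; set n := #|T|; set k := #|U|.
move=> cU dmax Md dn d1 H.
have kd : k = n - 2 * m by lia.
case: (leqP D 2) => hD.
  have E2 : maxn D 2 = 2 by lia.
  rewrite E2 in H.
  have : k >= 3 by lia.
  nia.
have E2 : maxn D 2 = D by lia.
rewrite E2 in H.
have h1 : m * D <= d * D by apply: leq_mul.
have h2 : d * D <= d * (n - 2 * d - 1) by apply: leq_mul.
have h3 : d * (n - 2 * d - 1) < d * k.
  rewrite ltn_mul2l d1 /=; lia.
nia.
Qed.

End N.

Theorem lemma2p8 (T : finType) (e : rel T) (d : nat) :
  simple_graph e ->
  1 <= d ->
  3 * d + 2 <= #|T| ->
  d <= min_deg e ->
  max_deg e <= #|T| - 2 * d - 1 ->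
  exists M : {set {set T}}, matching e M && (#|M| == d.+1).
Proof.
move=> sg d1 dn dmin dmax.
suff: forall k, k <= d.+1 -> exists M : {set {set T}}, matching e M && (#|M| == k).
  by apply.
elim=> [_|k IH kd].
  exists set0; rewrite cards0 eqxx andbT; apply/matchingP; split.
    by move=> E; rewrite inE.
  by apply/trivIsetP => A B; rewrite inE.
have [M /andP [mM /eqP cM]] := IH (ltnW kd).
case: (boolP [exists M' : {set {set T}}, matching e M' && (#|M'| == k.+1)]).
  by case/existsP => M' H; exists M'.
move=> /existsPn nex; exfalso.
have noext : forall M', matching e M' -> #|M'| != #|M|.+1.
  move=> M' mM'; rewrite cM; have := nex M'; by rewrite mM'.
apply: (contra sg mM noext d1 dn dmin dmax).
by rewrite cM -ltnS.
Qed.
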